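(* Let $n \geq 1$. If $\Psi : \mathbf{R}^n \to \mathbf{R}^n$ is a primitive linear map (with respect to the Lorentz cone $\mathcal{L}_n$), then $\gamma(\Psi) \leq n$. Moreover, there exists a primitive linear map $\Psi : \mathbf{R}^n \to \mathbf{R}^n$ such that $\gamma(\Psi) = n$.
   Context: The $n$-dimensional Lorentz cone is $\mathcal{L}_n = \{(x_1,\dots,x_n) \in \mathbf{R}^n : x_n \geq (x_1^2+\dots+x_{n-1}^2)^{1/2}\}$, with interior $\mathrm{int}(\mathcal{L}_n)$. A linear map $\Psi : \mathbf{R}^n \to \mathbf{R}^n$ is positive if $\Psi(\mathcal{L}_n) \subset \mathcal{L}_n$, strictly positive if $\Psi(\mathcal{L}_n \setminus \{0\}) \subset \mathrm{int}(\mathcal{L}_n)$, and primitive if it is positive and there exists an integer $k \geq 1$ such that $\Psi^k$ is strictly positive. For primitive $\Psi$, $\gamma(\Psi)$ (the primitivity index) is the smallest such $k$. *)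

(* Defs.v *)
From HB Require Import structures.
From mathcomp Require Import all_boot all_order all_algebra.
From mathcomp Require Import all_classical all_reals all_analysis.
Set Implicit Arguments. Unset Strict Implicit. Unset Printing Implicit Defensive.
Import Order.TTheory GRing.Theory Num.Theory.
Import numFieldNormedType.Exports.
Local Open Scope classical_set_scope.
Local Open Scope ring_scope.

(* R^n is represented by column vectors 'cV[R]_n; coordinate x_{i+1} is x i 0.
   The last coordinate x_n is the one with index n.-1. *)

Definition lorentz (R : realType) (n : nat) : set 'cV[R]_n :=
  [set x | forall i : 'I_n, val i = n.-1 ->
     Num.sqrt (\sum_(j < n | val j != n.-1) (x j 0) ^+ 2) <= x i 0].

Definition positive_map (R : realType) (n : nat) (A : 'M[R]_n) : Prop :=
  forall x, @lorentz R n x -> @lorentz R n (A *m x).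

Definition strictly_positive_map (R : realType) (n : nat) (A : 'M[R]_n) : Prop :=
  forall x, @lorentz R n x -> x != 0 -> (interior (@lorentz R n)) (A *m x).

Definition primitive_map (R : realType) (n : nat) (A : 'M[R]_n) : Prop :=
  positive_map A /\ exists k : nat, (1 <= k)%N /\ strictly_positive_map (A ^+ k).

Definition is_primitivity_index (R : realType) (n : nat) (A : 'M[R]_n) (k : nat) : Prop :=
  [/\ (1 <= k)%N, strictly_positive_map (A ^+ k) &
      forall j : nat, (1 <= j)%N -> (j < k)%N -> ~ strictly_positive_map (A ^+ j)].

(* Main.v *)
Require Import Defs.
From HB Require Import structures.
From mathcomp Require Import all_boot all_order all_algebra.
From mathcomp Require Import all_classical all_reals all_analysis.
From mathcomp Require Import ring lra.
Set Implicit Arguments. Unset Strict Implicit. Unset Printing Implicit Defensive.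
Import Order.TTheory GRing.Theory Num.Theory.
Import numFieldNormedType.Exports.
Local Open Scope classical_set_scope.
Local Open Scope ring_scope.
Section Gen.
Variable R : realType.
Variable m : nat.
Notation V := 'cV[R]_(m.+1).

Definition tt (z : V) : R := z ord_max 0.
Definition sg (i : 'I_m.+1) : R := if val i == m then 1 else -1.
Definition bf (y z : V) : R := \sum_i sg i * (y i 0 * z i 0).
Definition q (z : V) : R := bf z z.
Definition spf (z : V) : R := \sum_(j < m.+1 | val j != m) z j 0 ^+ 2.

Lemma bf_split y z : bf y z = tt y * tt z - \sum_(j < m.+1 | val j != m) y j 0 * z j 0.
Proof.
rewrite /bf (bigD1 ord_max) //= /sg /= eqxx mul1r; congr (_ + _).
rewrite -sumrN; apply: eq_big => [i|i hi]; first by rewrite -val_eqE.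
by move: hi; rewrite -val_eqE /= => /negbTE ->; rewrite mulN1r.
Qed.

Lemma qE z : q z = tt z ^+ 2 - spf z.
Proof. by rewrite /q bf_split expr2 /spf; congr (_ - _); apply: eq_bigr => i _; rewrite expr2. Qed.

Lemma spf_ge0 z : 0 <= spf z.
Proof. by apply: sumr_ge0 => i _; exact: sqr_ge0. Qed.

Lemma lorentzE z : lorentz z <-> 0 <= tt z /\ 0 <= q z.
Proof.
rewrite qE subr_ge0; split.
  move=> /(_ ord_max erefl) h.
  have t0 : 0 <= tt z by apply: le_trans h; exact: sqrtr_ge0.
  split => //.
  rewrite -(sqr_sqrtr (spf_ge0 z)).
  by rewrite ler_sqr // ?nnegrE ?sqrtr_ge0.
move=> [t0 h] i hi.
have -> : i = ord_max by apply: val_inj.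
change (Num.sqrt (spf z) <= tt z).
rewrite -(@ger0_norm _ (tt z)) // -sqrtr_sqr.
by rewrite ler_sqrt // sqr_ge0.
Qed.

Lemma bfC y z : bf y z = bf z y.
Proof. by apply: eq_bigr => i _; rewrite [y i 0 * _]mulrC. Qed.

Lemma bfDr y z w : bf y (z + w) = bf y z + bf y w.
Proof. rewrite /bf -big_split /=; apply: eq_bigr => i _; rewrite !mxE; ring. Qed.

Lemma bfZr y a z : bf y (a *: z) = a * bf y z.
Proof. by rewrite /bf mulr_sumr; apply: eq_bigr => i _; rewrite !mxE; ring. Qed.

Lemma bfDl y z w : bf (z + w) y = bf z y + bf w y.
Proof. by rewrite bfC bfDr !(bfC y). Qed.

Lemma bfZl y a z : bf (a *: z) y = a * bf z y.
Proof. by rewrite bfC bfZr bfC. Qed.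

Lemma bfNr y z : bf y (- z) = - bf y z.
Proof. by rewrite -scaleN1r bfZr mulN1r. Qed.

Lemma bfNl y z : bf (- z) y = - bf z y.
Proof. by rewrite bfC bfNr bfC. Qed.

Lemma bf0r y : bf y 0 = 0.
Proof. by rewrite -(scale0r 0) bfZr mul0r. Qed.

Lemma bf0l y : bf 0 y = 0.
Proof. by rewrite bfC bf0r. Qed.

Lemma q_lin y s z : q (y + s *: z) = q y + s * (2 * bf y z) + s ^+ 2 * q z.
Proof.
rewrite /q !bfDl !bfDr !bfZl !bfZr (bfC z y); ring.
Qed.

Lemma qZ a z : q (a *: z) = a ^+ 2 * q z.
Proof. by rewrite /q bfZl bfZr; ring. Qed.

End Gen.
Lemma cvg_sumR (R : realType) (T : Type) (F : set_system T) {FF : Filter F}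
  (I : Type) (r : seq I) (f : I -> T -> R) (a : I -> R) :
  (forall i, f i x @[x --> F] --> a i) ->
  (\sum_(i <- r) f i x) @[x --> F] --> \sum_(i <- r) a i.
Proof.
move=> h; elim: r => [|i r IH].
  rewrite big_nil; under eq_cvg do rewrite big_nil; exact: cvg_cst.
rewrite big_cons; under eq_cvg do rewrite big_cons.
exact: cvgD.
Qed.

Section Topo.
Variable R : realType.
Variable m : nat.
Notation V := 'cV[R]_(m.+1).

Definition et : V := delta_mx ord_max 0.

Lemma bf_et (y : V) : bf y et = tt y.
Proof.
rewrite /bf (bigD1 ord_max) //= big1 ?addr0.
  by rewrite /sg /= eqxx mul1r /et mxE !eqxx /= mulr1.
by move=> i hi; rewrite /et mxE (negbTE hi) /= !mulr0.
Qed.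

Lemma tt_et : tt et = 1.
Proof. by rewrite /tt /et mxE !eqxx. Qed.

Lemma q_et : q et = 1.
Proof. by rewrite /q bf_et tt_et. Qed.

Lemma ttD (y z : V) : tt (y + z) = tt y + tt z.
Proof. by rewrite /tt mxE. Qed.

Lemma ttZ a (z : V) : tt (a *: z) = a * tt z.
Proof. by rewrite /tt mxE. Qed.

Lemma interiorE (z : V) : interior (@lorentz R m.+1) z <-> 0 < tt z /\ 0 < q z.
Proof.
split.
  move=> hK.
  have hg : (fun s : R => z + (- s) *: et) @ (nbhs (0:R)) --> z + (- 0) *: et.
    apply: cvgD; first exact: cvg_cst.
    apply: cvgZr_tmp; apply: cvgN; exact: cvg_id.
  rewrite oppr0 scale0r addr0 in hg.
  have /nbhs_ballP [eps /= eps0 H] := hg _ hK.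
  have hb : ball (0:R) eps (eps / 2).
    rewrite -ball_normE /= sub0r normrN gtr0_norm ?divr_gt0 //.
    by rewrite ltr_pdivrMr // ltr_pMr // ltr1n.
  have := H _ hb => /lorentzE [].
  rewrite q_lin ttD ttZ tt_et bf_et q_et => h1 h2.
  have e2 : 0 < eps / 2 by rewrite divr_gt0.
  split; first by lra.
  nra.
move=> [t0 q0].
have ct : tt y @[y --> z] --> tt z by exact: coord_continuous.
have cq : q y @[y --> z] --> q z.
  rewrite /q /bf; apply: (@cvg_sumR _ _ (nbhs z)) => i; apply: cvgMl_tmp; apply: cvgM; exact: coord_continuous.
have h1 := cvgr_gt _ ct _ t0.
have h2 := cvgr_gt _ cq _ q0.
rewrite /interior /=.
near=> y.
apply/lorentzE; split; apply: ltW; near: y; [exact: h1 | exact: h2].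
Unshelve. all: by end_near.
Qed.

End Topo.
Section Alg.
Variable R : realType.

Lemma poly_pos_near (a0 a1 a2 : R) : 0 < a0 ->
  exists2 d, 0 < d & forall s, `|s| <= d -> 0 < a0 + s * a1 + s ^+ 2 * a2.
Proof.
move=> a00.
set K := `|a1| + `|a2| + 1.
have K0 : 0 < K by rewrite /K ltr_wpDl // addr_ge0.
exists (Num.min 1 (a0 / (2 * K))).
  by rewrite lt_min ltr01 /= divr_gt0 // mulr_gt0.
move=> s hs.
have hs1 : `|s| <= 1 by apply: le_trans hs _; rewrite ge_min lexx.
have hs2 : `|s| <= a0 / (2 * K) by apply: le_trans hs _; rewrite ge_min lexx orbT.
have hs3 : `|s| * K <= a0 / 2.
  apply: le_trans (ler_wpM2r (ltW K0) hs2) _.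
  have Kn : K != 0 by rewrite gt_eqF.
  have -> : a0 / (2 * K) * K = a0 / 2 by field.
  by [].
have e1 : - (`|s| * `|a1|) <= s * a1.
  by rewrite -normrM; have := ler_norm (- (s * a1)); rewrite normrN; lra.
have e2 : - (`|s| * `|a2|) <= s ^+ 2 * a2.
  have : - (`|s ^+ 2| * `|a2|) <= s ^+ 2 * a2.
    by rewrite -normrM; have := ler_norm (- (s ^+ 2 * a2)); rewrite normrN; lra.
  apply: le_trans; rewrite lerN2 ler_wpM2r // normrX.
  by rewrite expr2 ler_piMr.
have e3 : `|s| * `|a1| + `|s| * `|a2| <= `|s| * K - `|s|.
  by rewrite /K le_eqVlt; apply/orP; left; apply/eqP; ring.
have e4 : 0 <= `|s| by [].
lra.
Qed.

Lemma onesided (a c d : R) : 0 < d ->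
  (forall s, 0 < s -> s <= d -> 0 <= s * a + s ^+ 2 * c) -> 0 <= a.
Proof.
move=> d0 h; rewrite leNgt; apply/negP => a0.
have na : 0 < - a by rewrite oppr_gt0.
have [d' d'0 hd'] := @poly_pos_near (- a) (- c) 0 na.
set s := Num.min d d'.
have s0 : 0 < s by rewrite lt_min d0 d'0.
have sd : s <= d by rewrite ge_min lexx.
have := h s s0 sd.
have := hd' s; rewrite gtr0_norm // ge_min lexx orbT => /(_ isT).
rewrite mulr0 addr0 mulrN => h1 h2.
have : 0 < s * (- a - s * c) by rewrite mulr_gt0.
have -> : s * (- a - s * c) = - (s * a + s ^+ 2 * c) by rewrite expr2; ring.
lra.
Qed.

Lemma twosided (a c d : R) : 0 < d ->
  (forall s, `|s| <= d -> 0 <= s * a + s ^+ 2 * c) -> a = 0.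
Proof.
move=> d0 h; apply/eqP; rewrite eq_le; apply/andP; split; last first.
  apply: (onesided d0) => s s0 sd; apply: h; rewrite gtr0_norm //.
rewrite -oppr_ge0; apply: (onesided (c := c) d0) => s s0 sd.
have := h (- s); rewrite normrN gtr0_norm // => /(_ sd).
by rewrite sqrrN mulNr mulrN.
Qed.

Lemma lin_nonneg (p c : R) : (forall r, 0 <= p + r * c) -> c = 0.
Proof.
move=> h; apply/eqP; apply/negP => /negP c0.
have := h (- (`|p| + 1) / c); rewrite mulrAC -mulrA divff // mulr1.
have := ler_norm p; lra.
Qed.

End Alg.
Lemma horner_mx_Xn (R : comNzRingType) m (A : 'M[R]_(m.+1)) i : horner_mx A ('X^i) = A ^+ i.
Proof. by rewrite rmorphXn /= horner_mx_X. Qed.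
Lemma horner_mx_cXn (R : comNzRingType) m (A : 'M[R]_(m.+1)) i (c : R) : horner_mx A (c *: 'X^i) = c *: A ^+ i.
Proof. by rewrite horner_mxZ horner_mx_Xn. Qed.
Lemma CH_expand (R : comNzRingType) m (A : 'M[R]_(m.+1)) :
  exists c : 'I_m.+1 -> R, A ^+ m.+1 = \sum_(i < m.+1) c i *: A ^+ i.
Proof.
have := Cayley_Hamilton A.
have lc : (char_poly A)`_m.+1 = 1.
  by have := monicP (char_poly_monic A); rewrite lead_coefE size_char_poly.
rewrite -(coefK (char_poly A)) poly_def size_char_poly big_ord_recr /= lc scale1r.
rewrite rmorphD raddf_sum /= horner_mx_Xn.
move/eqP; rewrite addrC addr_eq0 => /eqP ->.
exists (fun i => - (char_poly A)`_i); rewrite -sumrN; apply: eq_bigr => i _.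
by rewrite horner_mx_cXn scaleNr.
Qed.
Section Geo.
Variable R : realType.
Variable m : nat.
Notation V := 'cV[R]_(m.+1).

Lemma zero_of (z : V) : tt z = 0 -> 0 <= q z -> z = 0.
Proof.
move=> t0; rewrite qE t0 expr0n /= sub0r oppr_ge0 => hs.
have hs0 : spf z = 0 by apply/eqP; rewrite eq_le hs spf_ge0.
have hz := psumr_eq0P (fun i _ => sqr_ge0 (z i 0)) hs0.
apply/matrixP => i j; rewrite ord1 mxE.
case: (eqVneq (val i) m) => hi.
  by have -> : i = ord_max by apply: val_inj. 
by apply/eqP; rewrite -sqrf_eq0; apply/eqP; apply: hz.
Qed.

Lemma tt_pos (z : V) : lorentz z -> z != 0 -> 0 < tt z.
Proof.
move=> /lorentzE [t0 q0] z0; rewrite lt_neqAle t0 andbT.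
by apply/eqP => /esym h; move/eqP: z0; apply; apply: zero_of.
Qed.

Lemma int_lorentz (z : V) : 0 < tt z -> 0 <= q z -> lorentz z.
Proof. by move=> t0 q0; apply/lorentzE; rewrite ltW. Qed.

Lemma q_comb a b (v w : V) :
  q (a *: v + b *: w) = a ^+ 2 * q v + 2 * a * b * bf v w + b ^+ 2 * q w.
Proof. by rewrite q_lin qZ bfZl; ring. Qed.

Lemma q_le0 (z : V) : tt z = 0 -> q z <= 0.
Proof. by move=> h; rewrite qE h expr0n /= sub0r oppr_le0 spf_ge0. Qed.

Lemma bf_pos (v w : V) : lorentz v -> v != 0 -> 0 < tt w -> 0 < q w -> 0 < bf v w.
Proof.
move=> Kv v0 tw qw.
have tv := tt_pos Kv v0.
have [_ qv] := (lorentzE v).1 Kv.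
have := q_le0 (z := tt w *: v + (- tt v) *: w).
rewrite ttD !ttZ q_comb => /(_ (ltac:(ring))).
move=> h.
have h1 : 0 < tt v ^+ 2 * q w by rewrite mulr_gt0 // exprn_gt0.
have h2 : 0 <= tt w ^+ 2 * q v by rewrite mulr_ge0 // sqr_ge0.
have h3 : 0 < 2 * tt w * tt v * bf v w.
  rewrite sqrrN in h; move: h; rewrite mulrN mulNr. lra.
move: h3; rewrite pmulr_rgt0 //.
by rewrite !mulr_gt0.
Qed.

Lemma bf_prop (v w : V) : lorentz v -> v != 0 -> lorentz w ->
  q v = 0 -> q w = 0 -> bf v w = 0 -> w = (tt w / tt v) *: v.
Proof.
move=> Kv v0 Kw qv qw b0.
have tv := tt_pos Kv v0.
have := zero_of (z := tt w *: v + (- tt v) *: w).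
rewrite ttD !ttZ q_comb qv qw b0 => /(_ (ltac:(ring))).
rewrite !mulr0 !addr0 => /(_ (lexx 0)) /eqP.
rewrite scaleNr subr_eq0 => /eqP h.
by rewrite mulrC -scalerA h scalerA mulVf ?scale1r // gt_eqF.
Qed.

Lemma K_near2 (y z : V) : 0 < tt y -> 0 < q y ->
  exists2 d, 0 < d & forall s, `|s| <= d -> lorentz (y + s *: z).
Proof.
move=> ty qy.
have [d1 d10 h1] := poly_pos_near (2 * bf y z) (q z) qy.
have [d2 d20 h2] := poly_pos_near (tt z) 0 ty.
exists (Num.min d1 d2); first by rewrite lt_min d10 d20.
move=> s hs.
have hs1 : `|s| <= d1 by apply: le_trans hs _; rewrite ge_min lexx.
have hs2 : `|s| <= d2 by apply: le_trans hs _; rewrite ge_min lexx orbT.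
apply: int_lorentz.
  by have := h2 s hs2; rewrite mulr0 addr0 ttD ttZ mulrC.
by rewrite q_lin; apply: ltW; exact: h1.
Qed.

Lemma K_near1 (y z : V) : 0 < tt y -> 0 <= q y -> 0 < bf y z ->
  exists2 d, 0 < d & forall s, 0 < s -> s <= d -> lorentz (y + s *: z).
Proof.
move=> ty qy b0.
have b2 : 0 < 2 * bf y z by rewrite mulr_gt0.
have [d1 d10 h1] := poly_pos_near (q z) 0 b2.
have [d2 d20 h2] := poly_pos_near (tt z) 0 ty.
exists (Num.min d1 d2); first by rewrite lt_min d10 d20.
move=> s s0 hs.
have hs1 : `|s| <= d1 by rewrite gtr0_norm //; apply: le_trans hs _; rewrite ge_min lexx.
have hs2 : `|s| <= d2 by rewrite gtr0_norm //; apply: le_trans hs _; rewrite ge_min lexx orbT.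
apply: int_lorentz.
  by have := h2 s hs2; rewrite mulr0 addr0 ttD ttZ mulrC.
rewrite q_lin.
have := h1 s hs1; rewrite mulr0 addr0 => h.
have : 0 < s * (2 * bf y z + s * q z) by rewrite mulr_gt0.
have -> : s * (2 * bf y z + s * q z) = s * (2 * bf y z) + s ^+ 2 * q z by rewrite expr2; ring.
lra.
Qed.

End Geo.
Section Main.
Variable R : realType.
Variable m : nat.
Notation V := 'cV[R]_(m.+1).
Variable A : 'M[R]_(m.+1).
Hypothesis hpos : positive_map A.
Local Notation E := (et R m).

Lemma powS j (y : V) : A ^+ j.+1 *m y = A *m (A ^+ j *m y).
Proof. by rewrite exprS -mulmxE mulmxA. Qed.

Lemma AlinE (y z : V) s : A *m (y + s *: z) = A *m y + s *: (A *m z).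
Proof. by rewrite mulmxDr scalemxAr. Qed.

Lemma local (y : V) : lorentz y -> y != 0 -> q y = 0 -> q (A *m y) = 0 ->
  exists2 mu, 0 <= mu & forall z, bf (A *m y) (A *m z) = mu * bf y z.
Proof.
move=> Ky y0 qy qAy.
have ty := tt_pos Ky y0.
have tyn : tt y != 0 by rewrite gt_eqF.
have C : forall z, 0 < bf y z -> 0 <= bf (A *m y) (A *m z).
  move=> z bz.
  have qy0 : 0 <= q y by rewrite qy.
  have [d d0 hd] := K_near1 ty qy0 bz.
  have := @onesided _ (2 * bf (A *m y) (A *m z)) (q (A *m z)) d d0.
  rewrite pmulr_rge0 //; apply => s s0 sd.
  have /lorentzE [_] := hpos (hd s s0 sd).
  by rewrite AlinE q_lin qAy add0r.
exists (bf (A *m y) (A *m E) / tt y).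
  by apply: divr_ge0; [apply: C; rewrite bf_et | exact: ltW].
move=> z.
pose c := bf y z / tt y.
pose w := z + (- c) *: E.
have bw : bf y w = 0 by rewrite /w bfDr bfZr bf_et /c; field.
have hw : bf (A *m y) (A *m w) = 0.
  apply: (@lin_nonneg _ (bf (A *m y) (A *m E))) => r.
  have := C (E + r *: w); rewrite bfDr bfZr bw bf_et mulr0 addr0 => /(_ ty).
  by rewrite AlinE bfDr bfZr.
have ez : z = w + c *: E by rewrite /w -addrA scaleNr addNr addr0.
rewrite {1 2}ez AlinE bfDr bfZr hw bfDr bfZr bw bf_et add0r add0r /c.
by field.
Qed.

End Main.
Section Main2.
Variable R : realType.
Variable m : nat.
Notation V := 'cV[R]_(m.+1).
Variable A : 'M[R]_(m.+1).
Hypothesis hpos : positive_map A.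
Variable k : nat.
Hypothesis hk1 : (1 <= k)%N.
Hypothesis hks : strictly_positive_map (A ^+ k).

Lemma Ak_int (y : V) : lorentz y -> y != 0 -> 0 < tt (A ^+ k *m y) /\ 0 < q (A ^+ k *m y).
Proof. by move=> Ky y0; apply/interiorE; apply: hks. Qed.

Lemma iter_ok (y : V) j : lorentz y -> y != 0 ->
  lorentz (A ^+ j *m y) /\ A ^+ j *m y != 0.
Proof.
move=> Ky y0; elim: j => [|j [IH1 IH2]]; first by rewrite expr0 mul1mx.
rewrite powS; split; first exact: hpos.
apply/eqP => h.
have [_] := Ak_int IH1 IH2.
case: k hk1 => // k' _.
by rewrite exprSr -mulmxE -mulmxA h mulmx0 /q bf0l ltxx.
Qed.

Lemma back (y : V) : lorentz y -> 0 < q y -> A *m y != 0 -> q (A *m y) = 0 -> False.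
Proof.
move=> Ky qy Ay0 qAy.
have [ty0 _] := (lorentzE y).1 Ky.
have ty : 0 < tt y.
  rewrite lt_neqAle ty0 andbT; apply/eqP => /esym h.
  by move: (q_le0 h); rewrite leNgt qy.
have hz : forall z, bf (A *m y) (A *m z) = 0.
  move=> z.
  have [d d0 hd] := K_near2 z ty qy.
  have h2 : 2 * bf (A *m y) (A *m z) = 0.
    apply: (@twosided _ _ (q (A *m z)) _ d0) => s hs.
    have /lorentzE [_] := hpos (hd s hs).
    by rewrite AlinE q_lin qAy add0r.
  by move: h2 => /eqP; rewrite mulf_eq0 pnatr_eq0 /= => /eqP.
have KAy : lorentz (A *m y) by apply: hpos.
have [t1 q1] := Ak_int KAy Ay0.
have := bf_pos KAy Ay0 t1 q1.
case: k hk1 => // k' _.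
by rewrite powS hz ltxx.
Qed.

Lemma pow_eigen (y : V) c j : A *m y = c *: y -> A ^+ j *m y = c ^+ j *: y.
Proof.
move=> h; elim: j => [|j IH]; first by rewrite expr0 mul1mx scale1r.
by rewrite powS IH -scalemxAr h scalerA exprS mulrC.
Qed.

Lemma eigen_bad (y : V) c : lorentz y -> y != 0 -> q y = 0 -> A *m y = c *: y -> False.
Proof.
move=> Ky y0 qy h.
have [_] := Ak_int Ky y0.
by rewrite (pow_eigen k h) qZ qy mulr0 ltxx.
Qed.


Lemma main_x (x : V) : lorentz x -> x != 0 ->
  ~ interior (@lorentz R m.+1) (A ^+ m.+1 *m x) -> False.
Proof.
move=> Kx x0 hnot.
pose n := m.+1.
pose xs j := A ^+ j *m x.
have KX j : lorentz (xs j) by have [] := iter_ok j Kx x0.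
have NX j : xs j != 0 by have [] := iter_ok j Kx x0.
have AX j : A *m xs j = xs j.+1 by rewrite /xs powS.
have qn : q (xs n) = 0.
  have t := tt_pos (KX n) (NX n).
  have [_ qge] := (lorentzE _).1 (KX n).
  apply/eqP; rewrite eq_le qge andbT leNgt; apply/negP => qp.
  by apply: hnot; apply/interiorE; split.
have qback j : q (xs j.+1) = 0 -> q (xs j) = 0.
  move=> h; have [_ qj] := (lorentzE _).1 (KX j).
  move: qj; rewrite le_eqVlt => /orP [/eqP <- // | qpos].
  by exfalso; apply: (back (KX j) qpos); rewrite AX.
have qall j : (j <= n)%N -> q (xs j) = 0.
  suff H : forall d, (d <= n)%N -> q (xs (n - d)%N) = 0.
    by move=> hj; rewrite -(subKn hj); apply: H; rewrite leq_subr.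
  elim=> [|d IH] hd; first by rewrite subn0.
  apply: qback.
  have -> : (n - d.+1).+1 = (n - d)%N by rewrite subnSK.
  by apply: IH; rewrite ltnW.
have loc j : (j < n)%N ->
    exists2 mu, 0 <= mu & forall z, bf (A *m xs j) (A *m z) = mu * bf (xs j) z.
  move=> hj; apply: local => //; first by apply: qall; exact: ltnW.
  by rewrite AX; apply: qall.
have bfnz j : (j < n)%N -> bf (xs j) (xs j.+1) != 0.
  move=> hj; apply/eqP => b0.
  have e := bf_prop (KX j) (NX j) (KX j.+1) (qall j (ltnW hj)) (qall j.+1 hj) b0.
  apply: (eigen_bad (KX j) (NX j) (qall j (ltnW hj))).
  by rewrite AX; exact: e.
have [mu0 _ h0] := loc 0%N (ltn0Sn _).
have eqmu j : (j < n)%N -> forall z, bf (A *m xs j) (A *m z) = mu0 * bf (xs j) z.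
  elim: j => [|j IH] hj z; first exact: h0.
  have [mu' _ h'] := loc j.+1 hj.
  have e1 := h' (xs j).
  have e2 := IH (ltnW hj) (xs j.+1).
  rewrite !AX in e1 e2.
  have hb := bfnz j (ltnW hj).
  have : mu' = mu0.
    apply: (mulIf hb); rewrite -e2 (bfC (xs j)) -e1 bfC //.
  by move=> emu; rewrite h' emu.
pose W (z : V) := forall w, bf (A *m z) (A *m w) = mu0 * bf z w.
have W0 : W 0 by move=> w; rewrite mulmx0 !bf0l mulr0.
have WD a b : W a -> W b -> W (a + b).
  by move=> ha hb w; rewrite mulmxDr !bfDl (ha w) (hb w) mulrDr.
have WZ c a : W a -> W (c *: a).
  by move=> ha w; rewrite -scalemxAr !bfZl (ha w); ring.
have [c hc] := CH_expand A.
have shift d : xs (d + n)%N = \sum_(i < n) c i *: xs (d + i)%N.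
  rewrite /xs exprD hc mulr_sumr mulmx_suml; apply: eq_bigr => i _.
  by rewrite -scalerAr -scalemxAl -exprD.
have Wall j : W (xs j).
  elim/ltn_ind: j => j IH.
  case: (ltnP j n) => hj; first exact: eqmu.
  rewrite -(subnK hj) shift.
  apply: (big_ind W W0 WD) => i _; apply: WZ; apply: IH.
  by rewrite -{2}(subnK hj) ltn_add2l.
have qz j : q (xs j) = 0.
  elim: j => [|j IH]; first exact: qall.
  by rewrite -AX /q (Wall j (xs j)) -/(q (xs j)) IH mulr0.
have [_] := Ak_int Kx x0.
by rewrite -/(xs k) qz ltxx.
Qed.

Lemma sp_n : strictly_positive_map (A ^+ m.+1).
Proof.
move=> x Kx x0.
case: (pselect (interior (@lorentz R m.+1) (A ^+ m.+1 *m x))) => // h.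
by exfalso; apply: main_x Kx x0 h.
Qed.

End Main2.
Section Ex.
Variable R : realType.
Variable p : nat.
Notation V := 'cV[R]_(p.+2).

Definition Z (z : V) (k : nat) : R := z (inord k) 0.
Definition row2 (c1 c2 : R) (j : nat) : R := c1 * (j == p.+1)%:R + c2 * (j == 0%N)%:R.
Definition cf (i j : nat) : R :=
  if i == p.+1 then row2 (3 / 2) (- (1 / 2)) j
  else if i == 0%N then row2 (- (1 / 2)) (- (1 / 2)) j
  else if i == 1%N then row2 1 (-1) j
  else (j == i.-1)%:R.
Definition Amx : 'M[R]_(p.+2) := \matrix_(i, j) cf i j.
Definition g (z : V) (j : nat) : R := if j == 0%N then Z z p.+1 - Z z 0 else Z z j.

Lemma sum_delta (z : V) c a : (a < p.+2)%N ->
  \sum_(j < p.+2) c * (val j == a)%:R * z j 0 = c * Z z a.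
Proof.
move=> ha; rewrite (bigD1 (inord a)) //= big1 ?addr0.
  by rewrite inordK // eqxx mulr1.
move=> j hj; have : val j != a.
  by apply: contra hj => /eqP <-; apply/eqP; apply: val_inj; rewrite /= inordK.
by move/negbTE => ->; rewrite mulr0 mul0r.
Qed.

Lemma sum_row2 (z : V) c1 c2 :
  \sum_(j < p.+2) row2 c1 c2 j * z j 0 = c1 * Z z p.+1 + c2 * Z z 0.
Proof.
rewrite /row2; under eq_bigr do rewrite mulrDl.
by rewrite big_split /= !sum_delta.
Qed.

Lemma AZ (z : V) k : (k < p.+2)%N -> Z (Amx *m z) k = \sum_(j < p.+2) cf k j * z j 0.
Proof. by move=> hk; rewrite /Z mxE; apply: eq_bigr => j _; rewrite mxE inordK. Qed.

Lemma E1 (z : V) : Z (Amx *m z) p.+1 = 3 / 2 * Z z p.+1 - 1 / 2 * Z z 0.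
Proof. by rewrite AZ // /cf eqxx sum_row2; ring. Qed.

Lemma E2 (z : V) : Z (Amx *m z) 0 = - (1 / 2) * Z z p.+1 - 1 / 2 * Z z 0.
Proof. by rewrite AZ // /cf /= sum_row2; ring. Qed.

Lemma E3 (z : V) k : (1 <= k)%N -> (k <= p)%N -> Z (Amx *m z) k = g z k.-1.
Proof.
move=> k1 kp; rewrite AZ; last by rewrite ltnS ltnW.
have kp1 : (k == p.+1) = false by apply/negbTE; rewrite neq_ltn ltnS kp.
have k0 : (k == 0%N) = false by apply/negbTE; rewrite -lt0n.
rewrite /cf /g kp1 k0.
case: (eqVneq k 1%N) => [ek|k1'].
  by rewrite ek /= sum_row2; ring.
have -> : (k.-1 == 0%N) = false.
  by apply/negbTE; move: k1 k1'; case: k {kp kp1 k0} => [|[|k]].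
under eq_bigr do rewrite -[(_ == _)%:R]mul1r.
by rewrite sum_delta ?mul1r // ltnS; apply: leq_trans (leq_pred _) _; rewrite ltnW.
Qed.

End Ex.
Section Ex2.
Variable R : realType.
Variable p : nat.
Notation V := 'cV[R]_(p.+2).
Notation A := (Amx R p).

Lemma tt_Z (z : V) : tt z = Z z p.+1.
Proof. by rewrite /tt /Z; congr (z _ 0); apply: val_inj; rewrite /= inordK. Qed.

Lemma spfZ (z : V) : spf z = \sum_(0 <= k < p.+1) Z z k ^+ 2.
Proof.
rewrite /spf big_mkcond big_ord_recr /= eqxx addr0 big_mkord.
apply: eq_bigr => i _; rewrite /= (ltn_eqF (ltn_ord i)) /= /Z; congr (z _ 0 ^+ 2).
by apply: val_inj; rewrite /= inordK // ltnS ltnW.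
Qed.

Lemma spf_split (z : V) : spf z = Z z 0 ^+ 2 + \sum_(0 <= k < p) g z k.+1 ^+ 2.
Proof. by rewrite spfZ big_nat_recl. Qed.

Lemma gsum (z : V) :
  \sum_(0 <= k < p) g z k.+1 ^+ 2 = \sum_(0 <= k < p) g z k ^+ 2 + g z p ^+ 2 - g z 0 ^+ 2.
Proof.
have h1 : \sum_(0 <= k < p.+1) g z k ^+ 2 = g z 0 ^+ 2 + \sum_(0 <= k < p) g z k.+1 ^+ 2.
  exact: big_nat_recl.
have h2 : \sum_(0 <= k < p.+1) g z k ^+ 2 = \sum_(0 <= k < p) g z k ^+ 2 + g z p ^+ 2.
  exact: big_nat_recr.
rewrite h2 in h1.
by rewrite h1; ring.
Qed.

Lemma spfA (z : V) : spf (A *m z) = Z (A *m z) 0 ^+ 2 + \sum_(0 <= k < p) g z k ^+ 2.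
Proof.
rewrite spf_split; congr (_ + _); apply: eq_big_nat => k /andP [_ kp].
by rewrite /g /= E3.
Qed.

Lemma E4 (z : V) : q (A *m z) = q z + g z p ^+ 2.
Proof.
have g0 : g z 0 = Z z p.+1 - Z z 0 by [].
rewrite !qE !tt_Z spfA spf_split gsum E1 E2 g0.
move: (\sum_(0 <= k < p) g z k ^+ 2) (g z p) (Z z p.+1) (Z z 0) => S G a b.
by field; rewrite ?pnatr_eq0.
Qed.

End Ex2.
Section Ex3.
Variable R : realType.
Variable p : nat.
Notation V := 'cV[R]_(p.+2).
Notation A := (Amx R p).

Lemma powSA j (y : V) : A ^+ j.+1 *m y = A *m (A ^+ j *m y).
Proof. by rewrite exprS -mulmxE mulmxA. Qed.

Lemma powSr j (y : V) : A ^+ j.+1 *m y = A ^+ j *m (A *m y).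
Proof. by rewrite exprSr -mulmxE mulmxA. Qed.

Lemma E5 (z : V) : g (A *m z) 0 = 2 * tt z.
Proof. by rewrite /g /= E1 E2 tt_Z; field; rewrite ?pnatr_eq0. Qed.

Lemma E6 (z : V) j : (1 <= j)%N -> (j <= p)%N -> g (A *m z) j = g z j.-1.
Proof.
move=> j1 jp; rewrite {1}/g; have -> : (j == 0%N) = false by apply/negbTE; rewrite -lt0n.
exact: E3.
Qed.

Lemma giter i (z : V) j : (i <= j)%N -> (j <= p)%N -> g (A ^+ i *m z) j = g z (j - i).
Proof.
elim: i z j => [|i IH] z j hij hjp; first by rewrite expr0 mul1mx subn0.
rewrite powSr IH ?(ltnW hij) // E6.
- by rewrite subnS.
- by rewrite subn_gt0.
- by apply: leq_trans (leq_subr _ _) hjp.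
Qed.

Lemma gtop (z : V) : g (A ^+ p.+1 *m z) p = 2 * tt z.
Proof. by rewrite powSr giter // subnn E5. Qed.

Lemma qiter j (z : V) : q (A ^+ j.+1 *m z) = q (A ^+ j *m z) + g (A ^+ j *m z) p ^+ 2.
Proof. by rewrite powSA E4. Qed.

Lemma Apos : positive_map A.
Proof.
move=> z /lorentzE [t0 q0]; apply/lorentzE; split; last first.
  by rewrite E4 addr_ge0 // sqr_ge0.
rewrite tt_Z E1 -tt_Z.
have hs : 0 <= \sum_(0 <= k < p) g z k.+1 ^+ 2 by apply: sumr_ge0 => k _; exact: sqr_ge0.
move: q0; rewrite qE spf_split => q0.
have : Z z 0 <= tt z by nra.
lra.
Qed.

Lemma iterK j (z : V) : lorentz z -> lorentz (A ^+ j *m z).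
Proof.
move=> Kz; elim: j => [|j IH]; first by rewrite expr0 mul1mx.
by rewrite powSA; apply: Apos.
Qed.

Lemma Asp : strictly_positive_map (A ^+ p.+2).
Proof.
move=> z Kz z0; apply/interiorE.
have t := tt_pos Kz z0.
have [t1 q1] := (lorentzE _).1 (iterK p.+1 Kz).
have hq : 0 < q (A ^+ p.+2 *m z).
  rewrite qiter gtop.
  have : 0 < (2 * tt z) ^+ 2 by rewrite exprn_gt0 // mulr_gt0.
  lra.
split => //.
have [t2 _] := (lorentzE _).1 (iterK p.+2 Kz).
rewrite lt_neqAle t2 andbT; apply/eqP => /esym h.
by have := q_le0 h; rewrite leNgt hq.
Qed.

Definition zs : V := \col_(i < p.+2) (((val i == 0%N) || (val i == p.+1))%:R : R).

Lemma Zzs k : (k < p.+2)%N -> Z zs k = ((k == 0%N) || (k == p.+1))%:R.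
Proof. by move=> hk; rewrite /Z /zs mxE /= inordK. Qed.

Lemma tt_zs : tt zs = 1.
Proof. by rewrite tt_Z Zzs // eqxx orbT. Qed.

Lemma gzs j : (j <= p)%N -> g zs j = 0.
Proof.
case: j => [|j] jp.
  by rewrite /g /= !Zzs //= eqxx subrr.
rewrite /g /= Zzs; last by rewrite ltnS ltnW.
by rewrite /= ltn_eqF.
Qed.

Lemma q_zs : q zs = 0.
Proof.
rewrite qE spf_split tt_zs Zzs // big_nat_cond big1 ?addr0 ?expr1n ?subrr //.
by move=> k /andP [/andP [_ kp] _]; rewrite gzs // expr0n.
Qed.

Lemma K_zs : lorentz zs.
Proof. by apply/lorentzE; rewrite tt_zs q_zs ler01 lexx. Qed.

Lemma zs0 : zs != 0.
Proof. by apply/eqP => h; have := tt_zs; rewrite h /tt mxE => /eqP; rewrite eq_sym oner_eq0. Qed.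

Lemma q_zs_iter j : (j <= p.+1)%N -> q (A ^+ j *m zs) = 0.
Proof.
elim: j => [|j IH] hj; first by rewrite expr0 mul1mx q_zs.
by rewrite qiter IH ?(ltnW hj) // giter // gzs ?leq_subr // expr0n addr0.
Qed.

Lemma notsp j : (1 <= j)%N -> (j < p.+2)%N -> ~ strictly_positive_map (A ^+ j).
Proof.
move=> _ hj hsp; have /interiorE [_] := hsp zs K_zs zs0.
by rewrite q_zs_iter // ltxx.
Qed.

End Ex3.

Lemma one_sp (R : realType) : strictly_positive_map ((1 : 'M[R]_1) ^+ 1).
Proof.
move=> x Kx x0; rewrite expr1 mul1mx; apply/interiorE.
have t := tt_pos Kx x0; split => //.
rewrite qE /spf big_mkcond big_ord1 /= subr0.
by rewrite exprn_gt0.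
Qed.

Theorem theorem1 (R : realType) (n : nat) (hn : (1 <= n)%N) :
  (forall (A : 'M[R]_n) (k : nat),
      primitive_map A -> is_primitivity_index A k -> (k <= n)%N) /\
  (exists A : 'M[R]_n, primitive_map A /\ is_primitivity_index A n).
Proof.
case: n hn => [//|m] _; split.
  move=> A k [hpos _] [hk1 hks hmin].
  rewrite leqNgt; apply/negP => hlt.
  by apply: (hmin m.+1) => //; exact: (sp_n hpos hk1 hks).
case: m => [|p].
  exists 1; split.
    split; first by move=> x Kx; rewrite mul1mx.
    by exists 1%N; split => //; exact: one_sp.
  by split => //; [exact: one_sp | move=> j j1 jlt; move: j1; rewrite leqNgt jlt].
exists (Amx R p); split.
  by split; [exact: Apos | exists p.+2; split => //; exact: Asp].
split => //; first exact: Asp.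
by move=> j; exact: notsp.
Qed.
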